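(* If a group $G$ has a normal subgroup $N$ that is a free group and $G/N$ is amenable, then $G$ is residually amenable.
   Context: Groups are discrete. A group is residually amenable if every non-trivial element has non-trivial image under some surjective homomorphism onto an amenable group. *)

(* Defs.v *)
From Stdlib Require Import Reals List.
Import ListNotations.
Open Scope R_scope.

Record group := Group {
  carrier :> Type;
  mul : carrier -> carrier -> carrier;
  one : carrier;
  inv : carrier -> carrier;
  mulA : forall x y z, mul x (mul y z) = mul (mul x y) z;
  mul1g : forall x, mul one x = x;
  mulg1 : forall x, mul x one = x;
  mulVg : forall x, mul (inv x) x = one;
  mulgV : forall x, mul x (inv x) = one
}.

Arguments mul {g}.
Arguments one {g}.
Arguments inv {g}.

Definition is_hom (G H : group) (f : G -> H) : Prop :=
  forall x y : G, f (mul x y) = mul (f x) (f y).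

Definition surjective {A B : Type} (f : A -> B) : Prop :=
  forall y, exists x, f x = y.

Definition is_subgroup (G : group) (N : G -> Prop) : Prop :=
  N one /\ (forall x y, N x -> N y -> N (mul x y)) /\ (forall x, N x -> N (inv x)).

Definition is_normal (G : group) (N : G -> Prop) : Prop :=
  is_subgroup G N /\ (forall g n : G, N n -> N (mul (mul g n) (inv g))).

(* Words in letters of G: (s, true) stands for s, (s, false) for s^-1. *)
Definition letter_val {G : group} (l : G * bool) : G :=
  if snd l then fst l else inv (fst l).

Fixpoint word_val {G : group} (w : list (G * bool)) : G :=
  match w with
  | [] => one
  | l :: w' => mul (letter_val l) (word_val w')
  end.

Fixpoint reduced {G : group} (w : list (G * bool)) : Prop :=
  match w with
  | [] => True
  | l :: w' =>
      match w' with
      | [] => True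
      | l' :: _ => ~ (fst l = fst l' /\ snd l <> snd l') /\ reduced w'
      end
  end.

Definition word_over {G : group} (S : G -> Prop) (w : list (G * bool)) : Prop :=
  Forall (fun l => S (fst l)) w.

Definition free_subgroup (G : group) (N : G -> Prop) : Prop :=
  is_subgroup G N /\
  exists S : G -> Prop,
    (forall s, S s -> N s) /\
    (forall n, N n -> exists w, word_over S w /\ word_val w = n) /\
    (forall w, word_over S w -> reduced w -> w <> [] -> word_val w <> one).

Definition amenable (G : group) : Prop :=
  exists m : (G -> Prop) -> R,
    (forall A, 0 <= m A) /\
    m (fun _ => True) = 1 /\
    (forall A B : G -> Prop, (forall x, A x -> B x -> False) ->
       m (fun x => A x \/ B x) = m A + m B) /\
    (forall (g : G) (A : G -> Prop), m (fun x => A (mul (inv g) x)) = m A).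

Definition residually_amenable (G : group) : Prop :=
  forall g : G, g <> one ->
    exists (Q : group) (f : G -> Q),
      is_hom G Q f /\ surjective f /\ amenable Q /\ f g <> one.

(* "G/N is amenable", expressed through a quotient map: there is a surjective
   homomorphism onto an amenable group whose kernel is exactly N. *)
Definition amenable_quotient (G : group) (N : G -> Prop) : Prop :=
  exists (Q : group) (f : G -> Q),
    is_hom G Q f /\ surjective f /\ (forall x, f x = one <-> N x) /\ amenable Q.

(* Main.v *)
From Pilot Require Import Defs.
From Stdlib Require Import Reals ClassicalEpsilon FunctionalExtensionality PropExtensionality.
From HB Require Import structures.
From mathcomp Require Import all_boot all_order all_algebra all_fingroup.
From mathcomp Require Import boolp.
From mathcomp Require classical_sets filter.
From mathcomp Require Import Rstruct.
From mathcomp Require Import ring lra zify.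
Set Implicit Arguments. Unset Strict Implicit. Unset Printing Implicit Defensive.
Module P0.

Section GroupBasics.
Variable G : Defs.group.
Local Notation "x ⋅ y" := (@Defs.mul G x y) (at level 40, left associativity).
Local Notation "x ⁻¹" := (@Defs.inv G x) (at level 3, format "x ⁻¹").
Local Notation "'𝟙'" := (@Defs.one G).

Lemma gmulA (x y z : G) : x ⋅ (y ⋅ z) = x ⋅ y ⋅ z. Proof. exact: (@Defs.mulA G). Qed.
Lemma gmul1 (x : G) : 𝟙 ⋅ x = x. Proof. exact: (@Defs.mul1g G). Qed.
Lemma gmulr1 (x : G) : x ⋅ 𝟙 = x. Proof. exact: (@Defs.mulg1 G). Qed.
Lemma gmulV (x : G) : x⁻¹ ⋅ x = 𝟙. Proof. exact: (@Defs.mulVg G). Qed.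
Lemma gmulVr (x : G) : x ⋅ x⁻¹ = 𝟙. Proof. exact: (@Defs.mulgV G). Qed.
Lemma gmulKl (x y : G) : x⁻¹ ⋅ (x ⋅ y) = y.
Proof. by rewrite gmulA gmulV gmul1. Qed.
Lemma gmulKVl (x y : G) : x ⋅ (x⁻¹ ⋅ y) = y.
Proof. by rewrite gmulA gmulVr gmul1. Qed.
Lemma gmulKr (x y : G) : y ⋅ x ⋅ x⁻¹ = y.
Proof. by rewrite -gmulA gmulVr gmulr1. Qed.
Lemma gmulKVr (x y : G) : y ⋅ x⁻¹ ⋅ x = y.
Proof. by rewrite -gmulA gmulV gmulr1. Qed.
Lemma gcancl (x y z : G) : x ⋅ y = x ⋅ z -> y = z.
Proof. by move=> h; rewrite -(gmulKl x y) h gmulKl. Qed.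
Lemma gcancr (x y z : G) : y ⋅ x = z ⋅ x -> y = z.
Proof. by move=> h; rewrite -(gmulKr x y) h gmulKr. Qed.
Lemma ginv_uniq (x y : G) : x ⋅ y = 𝟙 -> y = x⁻¹.
Proof. by move=> h; apply: (@gcancl x); rewrite h gmulVr. Qed.
Lemma ginvK (x : G) : x⁻¹⁻¹ = x.
Proof. by symmetry; apply: ginv_uniq; rewrite gmulV. Qed.
Lemma ginvM (x y : G) : (x ⋅ y)⁻¹ = y⁻¹ ⋅ x⁻¹.
Proof. by symmetry; apply: ginv_uniq; rewrite -gmulA (gmulA y) gmulVr gmul1 gmulVr. Qed.
Lemma ginv1 : 𝟙⁻¹ = 𝟙.
Proof. by symmetry; apply: ginv_uniq; rewrite gmul1. Qed.
Lemma geq1 (x y : G) : x⁻¹ ⋅ y = 𝟙 -> x = y.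
Proof. by move=> h; rewrite -(gmulKVl x y) h gmulr1. Qed.
End GroupBasics.

Section Quotient.
Variable G : Defs.group.
Local Notation "x ⋅ y" := (@Defs.mul G x y) (at level 40, left associativity).
Local Notation "x ⁻¹" := (@Defs.inv G x) (at level 3, format "x ⁻¹").
Local Notation "'𝟙'" := (@Defs.one G).
Variable K : G -> Prop.
Hypothesis nK : is_normal G K.

Definition coset (x : G) : G -> Prop := fun y => K (x⁻¹ ⋅ y).
Definition qcar := {P : G -> Prop | exists x, P = coset x}.

Lemma K1 : K 𝟙. Proof. by case: nK => [[]]. Qed.
Lemma KM x y : K x -> K y -> K (x ⋅ y). Proof. by case: nK => [[_ []]]; auto. Qed.
Lemma KV x : K x -> K x⁻¹. Proof. by case: nK => [[_ []]]; auto. Qed.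
Lemma KJ g n : K n -> K (g ⋅ n ⋅ g⁻¹). Proof. by case: nK => _; auto. Qed.

Lemma coset_eq x y : coset x = coset y <-> K (x⁻¹ ⋅ y).
Proof.
split=> [h|h].
  have : coset x y by rewrite h /coset gmulV; exact: K1.
  by [].
apply: functional_extensionality => z; apply: propositional_extensionality.
rewrite /coset; split=> hz.
  have := KM (KV h) hz. by rewrite ginvM ginvK gmulA gmulKr.
have := KM h hz. by rewrite gmulA gmulKr.
Qed.

Definition qmk (x : G) : qcar := exist _ (coset x) (ex_intro _ x erefl).

Definition qrep (P : qcar) : G :=
  proj1_sig (ClassicalEpsilon.constructive_indefinite_description _ (proj2_sig P)).

Lemma qrepK P : qmk (qrep P) = P.
Proof.
rewrite /qrep; case: (ClassicalEpsilon.constructive_indefinite_description _ _) => x hx /=.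
case: P hx => P pP /= hx; subst P.
by rewrite /qmk; f_equal; apply: proof_irrelevance.
Qed.

Lemma qmk_eq x y : qmk x = qmk y <-> K (x⁻¹ ⋅ y).
Proof.
rewrite -coset_eq; split => [h|h].
  by have := f_equal (@proj1_sig _ _) h.
by rewrite /qmk; move: (ex_intro _ x _) (ex_intro _ y _); rewrite h => p q;
  f_equal; apply: proof_irrelevance.
Qed.

Definition qmul (P Q : qcar) : qcar := qmk (qrep P ⋅ qrep Q).
Definition qinv (P : qcar) : qcar := qmk (qrep P)⁻¹.
Definition qone : qcar := qmk 𝟙.

Lemma qmkM x y : qmul (qmk x) (qmk y) = qmk (x ⋅ y).
Proof.
apply/qmk_eq; rewrite /qmul.
set a := qrep (qmk x); set b := qrep (qmk y).
have ha : K (x⁻¹ ⋅ a) by apply/qmk_eq; rewrite /a qrepK.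
have hb : K (y⁻¹ ⋅ b) by apply/qmk_eq; rewrite /b qrepK.
rewrite ginvM.
have h1 : K (a⁻¹ ⋅ x) by have := KV ha; rewrite ginvM ginvK.
have h2 : K (b⁻¹ ⋅ y) by have := KV hb; rewrite ginvM ginvK.
have e : b⁻¹ ⋅ (a⁻¹ ⋅ x) ⋅ b⁻¹⁻¹ ⋅ (b⁻¹ ⋅ y) = b⁻¹ ⋅ a⁻¹ ⋅ (x ⋅ y).
  by rewrite ginvK -(gmulA _ b) gmulKVl !gmulA.
by have := KM (KJ (b⁻¹) h1) h2; rewrite e.
Qed.

Lemma qmkV x : qinv (qmk x) = qmk x⁻¹.
Proof.
apply/qmk_eq; rewrite /qinv.
set a := qrep (qmk x).
have ha : K (x⁻¹ ⋅ a) by apply/qmk_eq; rewrite /a qrepK.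
rewrite ginvK.
by have := KJ x ha; rewrite gmulKVl.
Qed.

Lemma qind (P : qcar -> Prop) : (forall x, P (qmk x)) -> forall q, P q.
Proof. by move=> h q; rewrite -(qrepK q). Qed.

Definition Quot : Defs.group.
refine (@Defs.Group qcar qmul qone qinv _ _ _ _ _).
- move=> x y z; elim/qind: x; elim/qind: y; elim/qind: z => z y x.
  by rewrite !qmkM gmulA.
- by elim/qind => x; rewrite /qone qmkM gmul1.
- by elim/qind => x; rewrite /qone qmkM gmulr1.
- by elim/qind => x; rewrite qmkV qmkM gmulV.
- by elim/qind => x; rewrite qmkV qmkM gmulVr.
Defined.

Definition qmap (x : G) : Quot := qmk x.
Lemma qmap_hom : is_hom G Quot qmap.
Proof. by move=> x y; rewrite /qmap /= qmkM. Qed.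
Lemma qmap_surj : surjective qmap.
Proof. by move=> y; exists (qrep y); rewrite /qmap qrepK. Qed.
Lemma qmap_eq x y : qmap x = qmap y <-> K (x⁻¹ ⋅ y).
Proof. exact: qmk_eq. Qed.
Lemma qmapM x y : @Defs.mul Quot (qmap x) (qmap y) = qmap (x ⋅ y).
Proof. exact: qmkM. Qed.
Lemma qmapV x : @Defs.inv Quot (qmap x) = qmap x⁻¹.
Proof. exact: qmkV. Qed.
Lemma qmap1 : @Defs.one Quot = qmap 𝟙.
Proof. by []. Qed.
End Quotient.

End P0.
Import P0.

Module P1.
Local Open Scope nat_scope.

Lemma perm_extend (T : finType) (D : {set T}) (f : T -> T) :
  {in D &, injective f} -> exists p : {perm T}, forall x, x \in D -> p x = f x.
Proof.
move=> finj.
set eA := enum (~: D); set eB := enum (~: (f @: D)).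
have hs : size eA = size eB.
  rewrite /eA /eB -cardE -cardE.
  have h1 := cardsC D; have h2 := cardsC (f @: D).
  rewrite card_in_imset // -h1 in h2; exact: esym (addnI h2).
pose g x := if x \in D then f x else nth x eB (index x eA).
have ginj : injective g.
  move=> x y; rewrite /g.
  have hB z : z \notin D -> nth z eB (index z eA) \in ~: (f @: D).
    move=> hz; rewrite -mem_enum -/eB mem_nth // -hs index_mem /eA mem_enum.
    by rewrite in_setC.
  case: ifP => hx; case: ifP => hy.
  - exact: finj.
  - move=> e; have := hB y (negbT hy); rewrite -e in_setC.
    by rewrite (imset_f f hx).
  - move=> e; have := hB x (negbT hx); rewrite e in_setC.
    by rewrite (imset_f f hy).
  - move=> e.
    have hxA : x \in eA by rewrite /eA mem_enum in_setC hx.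
    have hyA : y \in eA by rewrite /eA mem_enum in_setC hy.
    have ix : index x eA < size eB by rewrite -hs index_mem.
    have iy : index y eA < size eB by rewrite -hs index_mem.
    have : index x eA = index y eA.
      apply/eqP; rewrite -(nth_uniq x ix iy) ?enum_uniq //.
      by rewrite e (set_nth_default y x iy).
    move=> ei; by rewrite -(nth_index x hxA) ei (set_nth_default y x) ?nth_index // index_mem.
exists (perm ginj) => x hx; by rewrite permE /g hx.
Qed.

Lemma In_rev_m (T : Type) (x : T) (s : list T) : List.In x (rev s) <-> List.In x s.
Proof.
elim: s => [|a s IH] //=; rewrite rev_cons -cats1 List.in_app_iff /=; tauto.
Qed.

Section Free.
Variable G : Defs.group.
Local Notation "x ⋅ y" := (@Defs.mul G x y) (at level 40, left associativity).
Local Notation "x ⁻¹" := (@Defs.inv G x) (at level 3, format "x ⁻¹").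
Local Notation "'𝟙'" := (@Defs.one G).

Lemma reduced_tail (l : G * bool) w : reduced (l :: w) -> reduced w.
Proof. by case: w => //= l' w [_ h]. Qed.

Lemma word_val_cat (w1 w2 : list (G * bool)) :
  word_val (w1 ++ w2) = word_val w1 ⋅ word_val w2.
Proof.
elim: w1 => [|l w IH] /=; first by rewrite gmul1.
by rewrite IH gmulA.
Qed.

Definition flip (l : G * bool) := (l.1, ~~ l.2).
Definition winv (w : list (G * bool)) := rev (map flip w).

Lemma letter_flip (l : G * bool) : letter_val (flip l) = (letter_val l)⁻¹.
Proof. by case: l => s [] /=; rewrite /letter_val /= ?ginvK. Qed.

Lemma word_val_winv w : word_val (winv w) = (word_val w)⁻¹.
Proof.
elim: w => [|l w IH] /=; first by rewrite /winv /= ginv1.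
rewrite /winv /= rev_cons -cats1 word_val_cat -/(winv w) IH /= gmulr1.
by rewrite letter_flip ginvM.
Qed.

Variable gT : finGroupType.
Variable sigma : G -> gT.

Definition lval (l : G * bool) : gT := if l.2 then sigma l.1 else (sigma l.1)^-1%g.
Fixpoint eval (w : list (G * bool)) : gT :=
  match w with [::] => 1%g | l :: w' => (lval l * eval w')%g end.

Lemma eval_cat w1 w2 : eval (w1 ++ w2) = (eval w1 * eval w2)%g.
Proof. elim: w1 => [|l w IH] /=; by rewrite ?mul1g // IH mulgA. Qed.

Lemma eval_winv w : eval (winv w) = (eval w)^-1%g.
Proof.
elim: w => [|l w IH] /=; first by rewrite invg1.
rewrite /winv /= rev_cons -cats1 eval_cat -/(winv w) IH /= mulg1 invMg.
by case: l => s [] /=; rewrite /lval /= ?invgK.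
Qed.

Lemma reduce (w : list (G * bool)) : exists r, reduced r /\
  (forall l, List.In l r -> List.In l w) /\ word_val r = word_val w /\ eval r = eval w.
Proof.
elim: w => [|l w [r [hr [hin [hv he]]]]].
  by exists [::]; split.
case: r hr hin hv he => [|l' r''] hr hin hv he.
  exists [:: l]; split => //; split; first by move=> x [->|[]]; left.
  by rewrite /= -hv -he.
case: (pselect (l.1 = l'.1 /\ l.2 <> l'.2)) => hc.
  exists r''; split; first exact: reduced_tail hr.
  split; first by move=> x hx; right; apply: hin; right.
  case: hc; case: l => s b; case: l' hr hin hv he => s' b' hr hin hv he /= hs hb; subst s'.
  split.
    rewrite /= -hv /= gmulA; case: b b' hb {hr hin hv he} => [] [] // _;
    by rewrite /letter_val /= ?gmulVr ?gmulV gmul1.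
  rewrite /= -he /= mulgA; case: b b' hb {hr hin hv he} => [] [] // _;
  by rewrite /lval /= ?mulgV ?mulVg mul1g.
exists [:: l, l' & r'']; split; first by split.
split; first by move=> x [->|hx]; [left|right; apply: hin].
by rewrite /= -hv -he.
Qed.

Variable S : G -> Prop.
Hypothesis Sfree : forall w, word_over S w -> reduced w -> w <> [::] -> word_val w <> 𝟙.

Lemma word_over_In w : word_over S w <-> (forall l, List.In l w -> S l.1).
Proof. exact: List.Forall_forall. Qed.

Lemma eval_wd w1 w2 : word_over S w1 -> word_over S w2 ->
  word_val w1 = word_val w2 -> eval w1 = eval w2.
Proof.
move=> h1 h2 e.
have [r [hr [hin [hv he]]]] := reduce (w1 ++ winv w2).
have hov : word_over S r.
  apply/word_over_In => l /hin; rewrite List.in_app_iff => -[].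
    by move/word_over_In: h1; apply.
  rewrite /winv In_rev_m List.in_map_iff => -[l0 [<- hl0]].
  by move/word_over_In: h2 => h2; exact: (h2 _ hl0).
have r0 : r = [::].
  case: (pselect (r = [::])) => // hne; exfalso.
  apply: (Sfree hov hr hne); rewrite hv word_val_cat word_val_winv e gmulVr //.
move: he; rewrite r0 eval_cat eval_winv /= => /esym /eqP.
by rewrite mulg_eq1 invgK => /eqP.
Qed.

Variable N : G -> Prop.
Hypothesis Ngen : forall n, N n -> exists w, word_over S w /\ word_val w = n.
Hypothesis SN : forall s, S s -> N s.

Definition phi (n : G) : gT :=
  match excluded_middle_informative (exists w, word_over S w /\ word_val w = n) with
  | left h => eval (proj1_sig (ClassicalEpsilon.constructive_indefinite_description _ h))
  | right _ => 1%g
  end.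

Lemma phi_word w : word_over S w -> phi (word_val w) = eval w.
Proof.
move=> hw; rewrite /phi; case: excluded_middle_informative => [h|[]]; last by exists w.
case: ClassicalEpsilon.constructive_indefinite_description => w' [hw' e] /=.
exact: eval_wd.
Qed.

Lemma phi_hom x y : N x -> N y -> phi (x ⋅ y) = (phi x * phi y)%g.
Proof.
move=> /Ngen [wx [hx <-]] /Ngen [wy [hy <-]].
rewrite -word_val_cat !phi_word ?eval_cat //.
by apply/word_over_In => l; rewrite List.in_app_iff => -[]; [move/word_over_In: hx|move/word_over_In: hy]; apply.
Qed.
End Free.

End P1.
Import P1.

Module P2.
Local Open Scope nat_scope.

Section Sep.
Variable G : Defs.group.
Variable r : list (G * bool).
Hypothesis hr : reduced r.
Local Notation k := (size r).
Hypothesis hk : (0 < k)%N.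
Let d0 : G * bool := (Defs.one, true).

Lemma reduced_nth_gen (w : list (G * bool)) : reduced w -> forall j, (j.+1 < size w)%N ->
  ~ ((nth d0 w j).1 = (nth d0 w j.+1).1 /\ (nth d0 w j).2 <> (nth d0 w j.+1).2).
Proof.
elim: w => [|l w IH] //= hw [|j] hj.
  by case: w hw hj IH => [|l' w] //= [h _].
by apply: IH => //; apply: reduced_tail hw.
Qed.

Lemma reduced_nth j : (j.+1 < k)%N ->
  ~ ((nth d0 r j).1 = (nth d0 r j.+1).1 /\ (nth d0 r j).2 <> (nth d0 r j.+1).2).
Proof. exact: reduced_nth_gen. Qed.

Definition pos (s : G) (j : nat) := (j < k)%N /\ nth d0 r j = (s, true).
Definition neg (s : G) (j : nat) := (j < k)%N /\ nth d0 r j = (s, false).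

Definition fN (s : G) (x : nat) : nat :=
  if `[< pos s x >] then x.+1 else if `[< (0 < x)%N /\ neg s x.-1 >] then x.-1 else x.

Definition Dom (s : G) : {set 'I_k.+1} :=
  [set x : 'I_k.+1 | `[< pos s x >] || `[< (0 < x)%N /\ neg s (x : nat).-1 >]].

Definition fI (s : G) (x : 'I_k.+1) : 'I_k.+1 := inord (fN s x).

Lemma pos_neg_adj s j : pos s j -> neg s j.+1 -> False.
Proof.
move=> [hj ej] [hj1 ej1]; apply: (reduced_nth hj1).
by rewrite ej ej1.
Qed.
Lemma neg_pos_adj s j : neg s j -> pos s j.+1 -> False.
Proof.
move=> [hj ej] [hj1 ej1]; apply: (reduced_nth hj1).
by rewrite ej ej1.
Qed.

Lemma fN_bound s (x : 'I_k.+1) : x \in Dom s -> (fN s x <= k)%N.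
Proof.
have xk := ltn_ord x.
rewrite inE /fN => /orP[/asboolP px|/asboolP [h0 nx]].
  by case: asboolP => [[hx _]|[]].
case: asboolP => [[hx _]|_]; first lia.
case: asboolP => [_|[]]; [lia|by split].
Qed.

Lemma fN_pos s x : pos s x -> fN s x = x.+1.
Proof. by rewrite /fN; case: asboolP. Qed.
Lemma fN_neg s x : ~ pos s x -> (0 < x)%N -> neg s x.-1 -> fN s x = x.-1.
Proof.
rewrite /fN => np x0 nx; case: asboolP => // _.
by case: asboolP => // [] [].
Qed.

Lemma Dom_cases s (x : 'I_k.+1) : x \in Dom s ->
  (pos s x /\ fN s x = x.+1) \/ (~ pos s x /\ (0 < x)%N /\ neg s x.-1 /\ fN s x = x.-1).
Proof.
rewrite inE => /orP[/asboolP px|/asboolP [x0 nx]]; first by left; rewrite fN_pos.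
case: (pselect (pos s x)) => px; first by left; rewrite fN_pos.
by right; rewrite fN_neg.
Qed.

Lemma fI_inj s : {in Dom s &, injective (fI s)}.
Proof.
move=> x y hx hy /(congr1 val) /=; rewrite /fI.
rewrite !inordK ?ltnS ?fN_bound // => e; apply: val_inj => /=.
case: (Dom_cases hx) => [[px ex]|[npx [x0 [nx ex]]]];
case: (Dom_cases hy) => [[py ey]|[npy [y0 [ny ey]]]]; rewrite ex ey in e.
- exact: succn_inj e.
- exfalso; apply: (@pos_neg_adj s x) => //.
  by have -> : x.+1 = y.-1 by [].
- exfalso; apply: (@pos_neg_adj s y) => //.
  by rewrite -e.
- by rewrite -(prednK x0) -(prednK y0) e.
Qed.

Definition sig_perm (s : G) : {perm 'I_k.+1} :=
  proj1_sig (cid (perm_extend (@fI_inj s))).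

Lemma sig_permE s x : x \in Dom s -> sig_perm s x = fI s x.
Proof. rewrite /sig_perm; case: cid => p hp /=; exact: hp. Qed.

Lemma step j : (j < k)%N ->
  lval sig_perm (nth d0 r j) (inord j) = inord j.+1.
Proof.
move=> hj; have hj1 : (j < k.+1)%N by apply: ltnW.
have hj2 : (j.+1 < k.+1)%N by [].
case e: (nth d0 r j) => [s [|]]; rewrite /lval /=.
- have hp : pos s j by split.
  have hD : (inord j : 'I_k.+1) \in Dom s.
    by rewrite inE (inordK hj1); apply/orP; left; apply/asboolP.
  by rewrite sig_permE // /fI (inordK hj1) fN_pos.
- have hn : neg s j by split.
  have hD : (inord j.+1 : 'I_k.+1) \in Dom s.
    by rewrite inE (inordK hj2); apply/orP; right; apply/asboolP; split.
  apply: (canLR (permK _)); rewrite sig_permE // /fI (inordK hj2).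
  rewrite fN_neg //; move=> hp; exact: (neg_pos_adj hn hp).
Qed.

Lemma path_eval d : (d <= k)%N ->
  eval sig_perm (drop (k - d) r) (inord (k - d)) = inord k.
Proof.
elim: d => [|d IH] hd.
  by rewrite subn0 drop_oversize //= perm1.
have hj : (k - d.+1 < k)%N by lia.
rewrite (drop_nth d0 hj) /= permM step // .
have -> : (k - d.+1).+1 = k - d by lia.
by apply: IH; lia.
Qed.

Lemma eval_ne1 : eval sig_perm r <> 1%g.
Proof.
move=> e; have := path_eval (leqnn k); rewrite subnn drop0 e perm1.
move/(congr1 val) => /=; rewrite !inordK //; lia.
Qed.
End Sep.

End P2.
Import P2.

Import Order.TTheory GRing.Theory Num.Theory.

Module Q0.
Import classical_sets filter.

Record ultra (I : Type) := Ultra {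
  uf :> (I -> Prop) -> Prop;
  uf_T : uf (fun _ => True);
  uf_0 : ~ uf (fun _ => False);
  uf_I : forall A B, uf A -> uf B -> uf (fun i => A i /\ B i);
  uf_S : forall A B : I -> Prop, (forall i, A i -> B i) -> uf A -> uf B;
  uf_C : forall A, uf A \/ uf (fun i => ~ A i)
}.

Lemma ultra_exists (I : Type) (le : I -> I -> Prop) (i0 : I) :
  (forall a, le a a) ->
  (forall a b c, le a b -> le b c -> le a c) ->
  (forall a b, exists c, le a c /\ le b c) ->
  exists U : ultra I, forall a, U (fun j => le a j).
Proof.
move=> refl trans dir.
set F := filter_from (@setT I) (fun a : I => (fun j => le a j) : set I).
have FF : Filter F.
  apply: filter_fromT_filter; first by exists i0.
  move=> a b; have [c [ac bc]] := dir a b; exists c => j /= cj.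
  by split; apply: trans cj.
have PF : ProperFilter F.
  by apply: filter_from_proper => a _; exists a.
have [U [UU FU]] := ultraFilterLemma PF.
have UF : Filter U by case: UU => [[]].
have UP : ProperFilter U by case: UU.
unshelve eexists (@Ultra I U _ _ _ _ _).
- by apply: filterT.
- exact: (filter_not_empty U).
- by move=> A B hA hB; exact: (filterI hA hB).
- by move=> A B hAB hA; apply: filterS hA => x; apply: hAB.
- by move=> A; exact: (in_ultra_setVsetC A UU).
- by move=> a /=; apply: FU; exists a.
Qed.

Section Ulim.
Variable I : Type.
Variable U : ultra I.
Local Open Scope ring_scope.

Definition is_ulim (a : I -> R) (L : R) :=
  forall e : R, 0 < e -> U (fun i => `|a i - L| < e).

Lemma is_ulim_uniq a L L' : is_ulim a L -> is_ulim a L' -> L = L'.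
Proof.
move=> h h'; apply/eqP; apply: contrapT => /negP hne.
have hp : 0 < `|L - L'| / 2.
  by apply: divr_gt0 => //; rewrite normr_gt0 subr_eq0.
have := uf_I (h _ hp) (h' _ hp).
move=> hU; case: (@uf_0 _ U); apply: (uf_S _ hU) => i [h1 h2].
have : `|L - L'| <= `|a i - L'| + `|a i - L|.
  have -> : L - L' = (a i - L') - (a i - L) by ring.
  exact: ler_normB.
lra.
Qed.

Definition ulim (a : I -> R) : R :=
  match excluded_middle_informative (exists L, is_ulim a L) with
  | left h => proj1_sig (ClassicalEpsilon.constructive_indefinite_description _ h)
  | right _ => 0
  end.

Lemma ulim_eq a L : is_ulim a L -> ulim a = L.
Proof.
move=> h; rewrite /ulim; case: excluded_middle_informative => [h'|[]]; last by exists L.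
case: ClassicalEpsilon.constructive_indefinite_description => L' hL' /=.
exact: is_ulim_uniq hL' h.
Qed.

Lemma ulim_exists (a : I -> R) (lo hi : R) :
  (forall i, lo <= a i <= hi) -> exists L, is_ulim a L.
Proof.
move=> hb.
pose E := fun r : R => U (fun i => r <= a i).
have bE : bound E.
  exists hi => r hr; apply/RleP; apply: contrapT => /negP; rewrite -ltNge => hr'.
  case: (@uf_0 _ U); apply: uf_S hr => i hi'.
  by have := hb i; lra.
have eE : exists x, E x.
  by exists lo; apply: uf_S (@uf_T _ U) => i _; case/andP: (hb i).
have [L [ub lub]] := completeness E bE eE.
exists L => e he.
have h1 : U (fun i => L - e < a i).
  apply: contrapT => hn.
  have : Rle L (L - e).
    apply: lub => r hr; apply/RleP; apply: contrapT => /negP; rewrite -ltNge => hlt.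
    apply: hn; apply: uf_S hr => i hri.
    rewrite RminusE in hlt; lra.
  rewrite RminusE; move/RleP; lra.
have h2 : U (fun i => a i < L + e).
  case: (@uf_C _ U (fun i => a i < L + e)) => // hn.
  have : E (L + e) by apply: uf_S hn => i /negP; rewrite -leNgt.
  move/ub/RleP; lra.
apply: uf_S (uf_I h1 h2) => i [h3 h4].
rewrite ltr_norml; apply/andP; split; lra.
Qed.

Lemma ulim_spec a lo hi : (forall i, lo <= a i <= hi) -> is_ulim a (ulim a).
Proof.
move=> hb; have [L hL] := ulim_exists hb; by rewrite (ulim_eq hL).
Qed.

Lemma ulim_bounds a lo hi : (forall i, lo <= a i <= hi) -> lo <= ulim a <= hi.
Proof.
move=> hb; have hs := ulim_spec hb.
apply/andP; split; apply: contrapT => /negP; rewrite -ltNge => hlt.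
  have he : 0 < lo - ulim a by lra.
  case: (@uf_0 _ U); apply: uf_S (hs _ he) => i; rewrite ltr_norml => /andP[h1 h2].
  by have := hb i; lra.
have he : 0 < ulim a - hi by lra.
case: (@uf_0 _ U); apply: uf_S (hs _ he) => i; rewrite ltr_norml => /andP[h1 h2].
by have := hb i; lra.
Qed.

Lemma ulimD a b la ha lb hb :
  (forall i, la <= a i <= ha) -> (forall i, lb <= b i <= hb) ->
  ulim (fun i => a i + b i) = ulim a + ulim b.
Proof.
move=> ba bb; apply: ulim_eq => e he.
have he2 : 0 < e / 2 by apply: divr_gt0.
apply: uf_S (uf_I (ulim_spec ba he2) (ulim_spec bb he2)) => i [h1 h2].
have : `|a i + b i - (ulim a + ulim b)| <= `|a i - ulim a| + `|b i - ulim b|.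
  have -> : a i + b i - (ulim a + ulim b) = (a i - ulim a) + (b i - ulim b) by ring.
  exact: ler_normD.
lra.
Qed.

Lemma ulim_ext a b : U (fun i => a i = b i) -> ulim a = ulim b.
Proof.
move=> hU; rewrite /ulim.
case: excluded_middle_informative => [ha|na]; case: excluded_middle_informative => [hb|nb] //.
- case: ClassicalEpsilon.constructive_indefinite_description => La hLa /=.
  case: ClassicalEpsilon.constructive_indefinite_description => Lb hLb /=.
  apply: (@is_ulim_uniq a) => // e he.
  by apply: uf_S (uf_I (hLb e he) hU) => i [h1 h2]; rewrite h2.
- exfalso; apply: nb; case: ha => L hL; exists L => e he.
  by apply: uf_S (uf_I (hL e he) hU) => i [h1 h2]; rewrite -h2.
- exfalso; apply: na; case: hb => L hL; exists L => e he.
  by apply: uf_S (uf_I (hL e he) hU) => i [h1 h2]; rewrite h2.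
Qed.

Lemma ulim_small a : (forall e, 0 < e -> U (fun i => `|a i| < e)) -> ulim a = 0.
Proof.
move=> h; apply: ulim_eq => e he; apply: uf_S (h e he) => i; by rewrite subr0.
Qed.

End Ulim.

Section UlimLb.
Variable I : Type.
Variable U : ultra I.
Local Open Scope ring_scope.
Lemma ulim_lb a lo hi L : (forall i, lo <= a i <= hi) ->
  (forall e, 0 < e -> U (fun i => L - e <= a i)) -> L <= ulim U a.
Proof.
move=> hb h; apply: contrapT => /negP; rewrite -ltNge => hlt.
have he : 0 < (L - ulim U a) / 2 by apply: divr_gt0 => //; lra.
case: (@uf_0 _ U); apply: (uf_S _ (uf_I (ulim_spec U hb he) (h _ he))) => i [h1 h2].
move: h1; rewrite ltr_norml => /andP[h3 h4]; lra.
Qed.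
End UlimLb.

End Q0.
Import Q0.

Module Q1.
Local Open Scope ring_scope.

Lemma pext_fun (T : Type) (A B : T -> Prop) : (forall x, A x <-> B x) -> A = B.
Proof. by move=> h; apply: functional_extensionality => x; apply: propositional_extensionality. Qed.

Section Integral.
Variable Q : Defs.group.
Variable m : (Q -> Prop) -> R.
Hypothesis m_ge0 : forall A, 0 <= m A.
Hypothesis m_T : m (fun _ => True) = 1.
Hypothesis m_add : forall A B : Q -> Prop, (forall x, A x -> B x -> False) ->
  m (fun x => A x \/ B x) = m A + m B.
Hypothesis m_inv : forall (g : Q) (A : Q -> Prop),
  m (fun x => A (Defs.mul (Defs.inv g) x)) = m A.

Lemma m_ext A B : (forall x, A x <-> B x) -> m A = m B.
Proof. by move=> h; rewrite (pext_fun h). Qed.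

Lemma m_empty : m (fun _ => False) = 0.
Proof.
have := m_add (A := fun _ => False) (B := fun _ => False) (fun _ h _ => h).
rewrite (@m_ext (fun x => False \/ False) (fun _ => False)); last by move=> x; tauto.
lra.
Qed.

Lemma m_empty' A : (forall x, ~ A x) -> m A = 0.
Proof. by move=> h; rewrite (@m_ext A (fun _ => False)) ?m_empty //; move=> x; split=> // /h. Qed.

Section Fin.
Variable Y : finType.
Variable kap : Q -> Y.

Lemma m_seq (s : seq Y) : uniq s ->
  m (fun q => kap q \in s) = \sum_(y <- s) m (fun q => kap q = y).
Proof.
elim: s => [|y s IH] /=.
  by move=> _; rewrite big_nil; apply: m_empty'.
case/andP => ys us; rewrite big_cons -IH //.
rewrite -m_add; last by move=> x /= -> ; rewrite (negbTE ys).
apply: m_ext => x; rewrite in_cons; split.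
  by case/orP => [/eqP ->|]; [left|right].
by case=> [->|->]; rewrite ?eqxx ?orbT.
Qed.

Lemma m_pred (P : pred Y) :
  m (fun q => P (kap q)) = \sum_(y | P y) m (fun q => kap q = y).
Proof.
rewrite -big_filter -m_seq; last by rewrite filter_uniq // index_enum_uniq.
by apply: m_ext => x; rewrite mem_filter mem_index_enum andbT.
Qed.

Lemma m_total : \sum_(y : Y) m (fun q => kap q = y) = 1.
Proof. by rewrite -m_T -(m_pred predT); apply: m_ext. Qed.

Lemma cellsum (c : Y -> R) lo hi :
  (forall q, lo <= c (kap q) <= hi) ->
  lo <= \sum_(y : Y) c y * m (fun q => kap q = y) <= hi.
Proof.
move=> hc; apply/andP; split.
  rewrite -[lo]mulr1 -m_total mulr_sumr; apply: ler_sum => y _.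
  case: (pselect (exists q, kap q = y)) => [[q hq]|hn].
    by apply: ler_wpM2r => //; have := hc q; rewrite hq => /andP[].
  rewrite m_empty' ?mulr0 // => x hx; apply: hn; by exists x.
rewrite -[hi]mulr1 -m_total mulr_sumr; apply: ler_sum => y _.
case: (pselect (exists q, kap q = y)) => [[q hq]|hn].
  by apply: ler_wpM2r => //; have := hc q; rewrite hq => /andP[].
rewrite m_empty' ?mulr0 // => x hx; apply: hn; by exists x.
Qed.

Lemma refine (Y' : finType) (rho : Y -> Y') (c : Y' -> R) :
  \sum_(y' : Y') c y' * m (fun q => rho (kap q) = y') =
  \sum_(y : Y) c (rho y) * m (fun q => kap q = y).
Proof.
have e y' : m (fun q => rho (kap q) = y') =
    \sum_(y | rho y == y') m (fun q => kap q = y).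
  rewrite -(m_pred (fun y => rho y == y')); apply: m_ext => x /=.
  by split => [->|/eqP].
under eq_bigr => y' _ do rewrite e mulr_sumr.
rewrite (exchange_big_dep xpredT) //=.
apply: eq_bigr => y _.
by rewrite (big_pred1 (rho y)) // => y'; rewrite eq_sym.
Qed.
End Fin.

Definition lev (n : nat) (f : Q -> R) (q : Q) : 'I_n.+1 :=
  inord (Num.truncn (n%:R * f q)).

Definition Sn (n : nat) (f : Q -> R) : R :=
  \sum_(y : 'I_n.+1) ((y : nat)%:R / n%:R) * m (fun q => lev n f q = y).

Lemma lev_spec n f q : (0 < n)%N -> 0 <= f q <= 1 ->
  ((lev n f q : nat)%:R <= n%:R * f q < (lev n f q : nat).+1%:R)%R.
Proof.
move=> hn /andP[f0 f1].
have h0 : 0 <= n%:R * f q by apply: mulr_ge0.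
have hle : (Num.truncn (n%:R * f q) <= n)%N.
  rewrite -(ler_nat R).
  have h1 : (Num.truncn (n%:R * f q))%:R <= n%:R * f q :> R by rewrite truncn_le.
  have h2 : n%:R * f q <= n%:R :> R by rewrite -[X in _ <= X]mulr1 ler_wpM2l.
  exact: le_trans h1 h2.
rewrite /lev inordK ?ltnS //; exact: truncn_itv.
Qed.

Lemma Sn_bounds n f lo hi : (0 < n)%N -> (forall q, 0 <= f q <= 1) ->
  (forall q, lo <= f q <= hi) -> lo - n%:R^-1 <= Sn n f <= hi.
Proof.
move=> hn hf hb; apply: cellsum => q.
have := lev_spec hn (hf q); have := hb q.
have hn' : (0 : R) < n%:R by rewrite ltr0n.
set y := (lev n f q : nat)%:R.
rewrite -natr1 -/y => /andP[h1 h2] /andP[h3 h4].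
apply/andP; split.
  rewrite ler_pdivlMr // mulrBl mulVf ?gt_eqF //.
  rewrite mulrC.
  have : n%:R * lo <= n%:R * f q by rewrite ler_wpM2l // ltW.
  lra.
rewrite ler_pdivrMr //.
have : n%:R * f q <= n%:R * hi by rewrite ler_wpM2l // ltW.
lra.
Qed.

Lemma Sn_inv n f t : Sn n (fun q => f (Defs.mul (Defs.inv t) q)) = Sn n f.
Proof.
apply: eq_bigr => y _; congr (_ * _).
exact: (m_inv t (fun q => lev n f q = y)).
Qed.

Lemma Sn_add n f g : (0 < n)%N -> (forall q, 0 <= f q) -> (forall q, 0 <= g q) ->
  (forall q, f q + g q <= 1) ->
  0 <= Sn n (fun q => f q + g q) - Sn n f - Sn n g <= n%:R^-1.
Proof.
move=> hn hf hg hfg.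
have hf' q : 0 <= f q <= 1 by have := hg q; have := hfg q; have := hf q; move=> *; apply/andP; split; lra.
have hg' q : 0 <= g q <= 1 by have := hg q; have := hfg q; have := hf q; move=> *; apply/andP; split; lra.
have hs' q : 0 <= f q + g q <= 1 by have := hg q; have := hfg q; have := hf q; move=> *; apply/andP; split; lra.
pose kap q := (lev n f q, lev n g q, lev n (fun q => f q + g q) q).
have e1 : Sn n f = \sum_(y : ('I_n.+1 * 'I_n.+1 * 'I_n.+1)%type)
    (((y.1.1 : nat)%:R / n%:R) * m (fun q => kap q = y)).
  by rewrite /Sn -(refine kap (fun y => y.1.1) (fun y => (y : nat)%:R / n%:R)).
have e2 : Sn n g = \sum_(y : ('I_n.+1 * 'I_n.+1 * 'I_n.+1)%type)
    (((y.1.2 : nat)%:R / n%:R) * m (fun q => kap q = y)).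
  by rewrite /Sn -(refine kap (fun y => y.1.2) (fun y => (y : nat)%:R / n%:R)).
have e3 : Sn n (fun q => f q + g q) = \sum_(y : ('I_n.+1 * 'I_n.+1 * 'I_n.+1)%type)
    (((y.2 : nat)%:R / n%:R) * m (fun q => kap q = y)).
  by rewrite /Sn -(refine kap (fun y => y.2) (fun y => (y : nat)%:R / n%:R)).
rewrite e1 e2 e3 -!sumrB.
have hn' : (0 : R) < n%:R by rewrite ltr0n.
under eq_bigr => y _ do rewrite -!mulrBl.
apply: (@cellsum _ kap (fun y => (((y.2 : nat)%:R - (y.1.1 : nat)%:R - (y.1.2 : nat)%:R) / n%:R)) 0 (n%:R^-1)) => q.
have := lev_spec hn (hf' q); have := lev_spec hn (hg' q); have := lev_spec (f := fun q => f q + g q) hn (hs' q).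
rewrite /kap /=.
set a := (lev n f q : nat); set b := (lev n g q : nat); set c := (lev n _ q : nat).
rewrite -!natr1 => /andP[h1 h2] /andP[h3 h4] /andP[h5 h6].
have hc1 : c%:R < a%:R + b%:R + 2 :> R by rewrite mulrDr in h1 h2; lra.
have hc2 : a%:R + b%:R < c%:R + 1 :> R by rewrite mulrDr in h1 h2; lra.
have hc1' : (c <= a + b + 1)%N.
  have : c%:R < (a + b + 2)%:R :> R by rewrite !natrD; lra.
  rewrite ltr_nat; lia.
have hc2' : (a + b <= c)%N.
  have : (a + b)%:R < (c + 1)%:R :> R by rewrite !natrD; lra.
  rewrite ltr_nat; lia.
have [hce|hce] : c = (a + b)%N \/ c = (a + b + 1)%N by lia.
  rewrite hce natrD.
  have -> : a%:R + b%:R - a%:R - b%:R = 0 :> R by ring.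
  by rewrite mul0r lexx invr_ge0 ltW.
rewrite hce !natrD.
have -> : a%:R + b%:R + 1%:R - a%:R - b%:R = 1 :> R by ring.
by rewrite mul1r lexx invr_ge0 ltW.
Qed.

Variable V : ultra nat.
Hypothesis hV : forall N0, V (fun N => (N0 <= N)%N).

Definition Int (f : Q -> R) : R := ulim V (fun N => Sn N.+1 f).

Lemma V_small (e : R) : 0 < e -> V (fun N => (N.+1)%:R^-1 < e).
Proof.
move=> he; apply: (uf_S _ (hV (Num.truncn e^-1))) => N hN.
rewrite invf_plt ?posrE ?ltr0n //.
have hi : 0 <= e^-1 by rewrite invr_ge0 ltW.
have := truncn_itv hi => /andP[_ h].
apply: lt_le_trans h _; rewrite ler_nat; exact: hN.
Qed.

Lemma Sn_range f N : (forall q, 0 <= f q <= 1) -> -1 <= Sn N.+1 f <= 1.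
Proof.
move=> hf; have := Sn_bounds (n := N.+1) (lo := 0) (hi := 1) (ltn0Sn N) hf hf.
have : (N.+1%:R)^-1 <= 1 :> R by rewrite invf_le1 ?ler1n ?ltr0n.
move=> h /andP[h1 h2].
move: h h1 h2; set x := (N.+1%:R)^-1 => h h1 h2.
apply/andP; split; [lra|done].
Qed.

Lemma Int_bounds f lo hi : (forall q, 0 <= f q <= 1) -> (forall q, lo <= f q <= hi) ->
  lo <= Int f <= hi.
Proof.
move=> hf hb; apply/andP; split.
  apply: (ulim_lb (lo := -1) (hi := 1)); first by move=> N; exact: Sn_range.
  move=> e he; apply: (uf_S _ (V_small he)) => N hN.
  have := Sn_bounds (n := N.+1) (ltn0Sn N) hf hb; case/andP => h1 _.
  move: hN h1; set x := (N.+1%:R)^-1 => hN h1; lra.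
have hb' : forall N, -1 <= Sn N.+1 f <= hi.
  move=> N; have := Sn_bounds (n := N.+1) (ltn0Sn N) hf hb; case/andP => _ h1.
  by have := Sn_range N hf; case/andP => h2 _; apply/andP; split.
by case/andP: (ulim_bounds V hb').
Qed.

Lemma Int_inv f t : Int (fun q => f (Defs.mul (Defs.inv t) q)) = Int f.
Proof. by rewrite /Int; congr (ulim V _); apply: functional_extensionality => N; rewrite Sn_inv. Qed.

Lemma Int_add f g : (forall q, 0 <= f q) -> (forall q, 0 <= g q) ->
  (forall q, f q + g q <= 1) -> Int (fun q => f q + g q) = Int f + Int g.
Proof.
move=> hf hg hfg.
have hf' q : 0 <= f q <= 1 by have := hg q; have := hfg q; have := hf q; move=> *; apply/andP; split; lra.
have hg' q : 0 <= g q <= 1 by have := hg q; have := hfg q; have := hf q; move=> *; apply/andP; split; lra.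
rewrite /Int -(ulimD V (fun N => Sn_range N hf') (fun N => Sn_range N hg')).
apply: ulim_eq => e he.
have he2 : 0 < e / 2 by apply: divr_gt0.
have hb : forall N, -2 <= Sn N.+1 f + Sn N.+1 g <= 2.
  move=> N; have := Sn_range N hf'; have := Sn_range N hg'.
  move=> /andP[h1 h2] /andP[h3 h4]; apply/andP; split; lra.
apply: (uf_S _ (uf_I (ulim_spec V hb he2) (V_small he2))) => N [h1 h2].
have := Sn_add (n := N.+1) (ltn0Sn N) hf hg hfg => /andP[h3 h4].
move: h1; rewrite ltr_norml => /andP[h5 h6].
move: h2 h3 h4 h5 h6; set x := (N.+1%:R)^-1 => h2 h3 h4 h5 h6.
set L := ulim V _ in h5 h6 *. set a := Sn N.+1 (fun q => _) in h3 h4 *.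
set b := Sn N.+1 f in h3 h4 h5 h6 *. set c := Sn N.+1 g in h3 h4 h5 h6 *.
clearbody x L a b c.
rewrite ltr_norml; apply/andP; split; lra.
Qed.

End Integral.

End Q1.
Import Q1.

Module Q2.

Section HomLemmas.
Variables (G Q : Defs.group) (f : G -> Q).
Hypothesis hf : is_hom G Q f.
Lemma hom1 : f Defs.one = Defs.one.
Proof.
apply: (@gcancl _ (f Defs.one)); rewrite -hf !gmulr1 //.
Qed.
Lemma homV x : f (Defs.inv x) = Defs.inv (f x).
Proof. by apply: ginv_uniq; rewrite -hf gmulVr hom1. Qed.
End HomLemmas.

Section Kdef.
Variable G : Defs.group.
Local Notation "x ⋅ y" := (@Defs.mul G x y) (at level 40, left associativity).
Local Notation "x ⁻¹" := (@Defs.inv G x) (at level 3, format "x ⁻¹").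
Local Notation "'𝟙'" := (@Defs.one G).
Variable N : G -> Prop.
Hypothesis nN : is_normal G N.
Variable gT : finGroupType.

Lemma N1 : N 𝟙. Proof. by case: nN => [[]]. Qed.
Lemma NM x y : N x -> N y -> N (x ⋅ y). Proof. by case: nN => [[_ []]]; auto. Qed.
Lemma NV x : N x -> N x⁻¹. Proof. by case: nN => [[_ []]]; auto. Qed.
Lemma NJ g n : N n -> N (g ⋅ n ⋅ g⁻¹). Proof. by case: nN => _; auto. Qed.

Definition Hom (psi : G -> gT) := forall x y, N x -> N y -> psi (x ⋅ y) = (psi x * psi y)%g.

Lemma Hom1 psi : Hom psi -> psi 𝟙 = 1%g.
Proof.
move=> h; apply: (@mulgI _ (psi 𝟙)); have e := h 𝟙 𝟙 N1 N1; rewrite gmul1 in e; by rewrite mulg1 -e.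
Qed.
Lemma HomV psi x : Hom psi -> N x -> psi x⁻¹ = (psi x)^-1%g.
Proof.
move=> h hx; apply: (@mulIg _ (psi x)).
have e := h x⁻¹ x (NV hx) hx; rewrite gmulV (Hom1 h) in e.
by rewrite mulVg e.
Qed.

Definition Kp (x : G) := N x /\ forall psi, Hom psi -> psi x = 1%g.

Lemma Kp_normal : is_normal G Kp.
Proof.
split; first split.
- by split; [exact: N1|move=> psi h; exact: Hom1].
- split.
    move=> x y [hx kx] [hy ky]; split; first exact: NM.
    by move=> psi h; rewrite h // kx // ky // mulg1.
  move=> x [hx kx]; split; first exact: NV.
  by move=> psi h; rewrite HomV // kx // invg1.
move=> g n [hn kn]; split; first exact: NJ.
move=> psi h.
pose psi' y := psi (g ⋅ y ⋅ g⁻¹).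
have h' : Hom psi'.
  move=> x y hx hy; rewrite /psi' -h; [|exact: NJ|exact: NJ].
  by congr psi; rewrite -!gmulA gmulKl.
exact: (kn psi' h').
Qed.
End Kdef.

End Q2.
Import Q2.

Module Q3.

Section Count.
Variable G : Defs.group.
Local Notation "x ⋅ y" := (@Defs.mul G x y) (at level 40, left associativity).
Local Notation "x ⁻¹" := (@Defs.inv G x) (at level 3, format "x ⁻¹").
Local Notation "'𝟙'" := (@Defs.one G).
Variable N : G -> Prop.
Hypothesis nN : is_normal G N.
Variable gT : finGroupType.

Local Notation Hom := (@Hom G N gT).
Local Notation K := (@Kp G N gT).
Let nK : is_normal G K := Kp_normal nN gT.
Local Notation H := (Quot nK).
Local Notation qm := (qmap nK).

Definition Cs (i : list G) (n : G) := N n /\ forall psi psi', Hom psi -> Hom psi' ->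
  (forall x, List.In x i -> psi x = psi' x) -> psi n = psi' n.

Lemma Cs1 i : Cs i 𝟙.
Proof. split; first exact: (N1 nN). by move=> psi psi' h h' _; rewrite !(Hom1 nN). Qed.
Lemma CsM i x y : Cs i x -> Cs i y -> Cs i (x ⋅ y).
Proof.
move=> [hx cx] [hy cy]; split; first exact: (NM nN).
by move=> psi psi' h h' a; rewrite h // h' // (cx _ _ h h' a) (cy _ _ h h' a).
Qed.
Lemma CsV i x : Cs i x -> Cs i x⁻¹.
Proof.
move=> [hx cx]; split; first exact: (NV nN).
by move=> psi psi' h h' a; rewrite !(HomV nN) // (cx _ _ h h' a).
Qed.
Lemma Cs_in i l : N l -> List.In l i -> Cs i l.
Proof. by move=> hl hi; split => // psi psi' _ _ a; apply: a. Qed.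

Lemma In_nth_m (i : list G) x : List.In x i -> exists j : 'I_(size i), nth 𝟙 i j = x.
Proof.
elim: i => [|a i IH] //= [->|hx].
  by exists (@Ordinal (size i).+1 0 erefl).
have [j hj] := IH hx.
by exists (@Ordinal (size i).+1 j.+1 (ltn_ord j)).
Qed.

Definition tup (i : list G) (psi : G -> gT) : {ffun 'I_(size i) -> gT} :=
  [ffun j : 'I_(size i) => psi (nth 𝟙 i j)].

Definition code (i : list G) (n : G) : {ffun {ffun 'I_(size i) -> gT} -> gT} :=
  [ffun t => match excluded_middle_informative (exists psi, Hom psi /\ tup i psi = t) with
   | left h => proj1_sig (cid h) n
   | right _ => 1%g end].

Lemma code_spec i n psi : Hom psi -> Cs i n -> code i n (tup i psi) = psi n.
Proof.
move=> h [hn cn]; rewrite /code ffunE.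
case: excluded_middle_informative => [e|[]]; last by exists psi.
case: cid => psi' [h' et] /=.
apply: cn => // x /In_nth_m [j <-].
by move/ffunP: et => /(_ j); rewrite !ffunE.
Qed.

Lemma code_eq i n n' : Cs i n -> Cs i n' -> (code i n = code i n' <-> K (n⁻¹ ⋅ n')).
Proof.
move=> hn hn'; split => [e|[hk kk]].
  split; first by apply: (NM nN); [apply: (NV nN)|]; [case: hn|case: hn'].
  move=> psi h; rewrite h; [|apply: (NV nN); by case: hn|by case: hn'].
  rewrite (HomV nN) //; last by case: hn.
  rewrite -(code_spec h hn) -(code_spec h hn') e; exact: mulVg.
apply/ffunP => t; rewrite !ffunE.
case: excluded_middle_informative => // e.
case: cid => psi [h _] /=.
have := kk psi h; rewrite h; [|apply: (NV nN); by case: hn|by case: hn'].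
rewrite (HomV nN) //; last by case: hn.
by move/eqP; rewrite mulg_eq1 => /eqP /invg_inj.
Qed.



Definition Sset (i : list G) (A : H -> Prop) (x : G) : {set {ffun {ffun 'I_(size i) -> gT} -> gT}} :=
  [set xi | `[< exists n, Cs i n /\ code i n = xi /\ A (qm (x ⋅ n)) >]].

Lemma SsetP i A x xi : reflect (exists n, Cs i n /\ code i n = xi /\ A (qm (x ⋅ n))) (xi \in Sset i A x).
Proof. rewrite inE; exact: asboolP. Qed.

Lemma code_qm i x n n' : Cs i n -> Cs i n' -> code i n = code i n' -> qm (x ⋅ n) = qm (x ⋅ n').
Proof.
move=> hn hn' /(code_eq hn hn') hk; apply/qmap_eq.
by rewrite ginvM -gmulA gmulKl.
Qed.

Lemma Sset_add i A B x : (forall z, A z -> B z -> False) ->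
  #|Sset i (fun z => A z \/ B z) x| = (#|Sset i A x| + #|Sset i B x|)%N.
Proof.
move=> dAB.
have -> : Sset i (fun z => A z \/ B z) x = Sset i A x :|: Sset i B x.
  apply/setP => xi; rewrite in_setU; apply/SsetP/orP.
    move=> [n [hn [e [ha|hb]]]]; [left|right]; apply/SsetP; by exists n.
  by case=> /SsetP [n [hn [e h]]]; exists n; split => //; split => //; [left|right].
rewrite cardsU.
have -> : Sset i A x :&: Sset i B x = set0.
  apply/setP => xi; rewrite inE in_set0; apply/negP => /andP[/SsetP [n [hn [e ha]]] /SsetP [n' [hn' [e' hb]]]].
  apply: (dAB _ ha); rewrite (code_qm x hn hn') //; by rewrite e e'.
by rewrite cards0 subn0.
Qed.

Lemma Sset_T_pos i x : (0 < #|Sset i (fun _ => True) x|)%N.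
Proof.
apply/card_gt0P; exists (code i 𝟙); apply/SsetP; exists 𝟙; split => //; exact: Cs1.
Qed.

Definition pickn i (xi : {ffun {ffun 'I_(size i) -> gT} -> gT}) : G :=
  match excluded_middle_informative (exists n, Cs i n /\ code i n = xi) with
  | left h => proj1_sig (cid h) | right _ => 𝟙 end.

Lemma picknP i n : Cs i n -> Cs i (pickn (code i n)) /\ code i (pickn (code i n)) = code i n.
Proof.
move=> hn; rewrite /pickn; case: excluded_middle_informative => [h|[]]; last by exists n.
by case: cid.
Qed.

Lemma Sset_le i A x l : Cs i l -> (#|Sset i A (x ⋅ l)| <= #|Sset i A x|)%N.
Proof.
move=> hl.
pose Phi (xi : {ffun {ffun 'I_(size i) -> gT} -> gT}) := code i (l ⋅ pickn xi).
have sub : Phi @: Sset i A (x ⋅ l) \subset Sset i A x.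
  apply/subsetP => _ /imsetP [xi /SsetP [n [hn [<- ha]]] ->].
  have [hp ep] := picknP hn.
  apply/SsetP; exists (l ⋅ pickn (code i n)); split; first exact: CsM.
  split => //; rewrite gmulA (@code_qm i (x ⋅ l) _ n) //.
have inj : {in Sset i A (x ⋅ l) &, injective Phi}.
  move=> _ _ /SsetP [n [hn [<- _]]] /SsetP [n' [hn' [<- _]]] e.
  have [hp ep] := picknP hn; have [hp' ep'] := picknP hn'.
  rewrite /Phi in e.
  have := (code_eq (CsM hl hp) (CsM hl hp')).1 e.
  rewrite ginvM -gmulA gmulKl => hk.
  by rewrite -ep -ep'; apply/(code_eq hp hp').
rewrite -(card_in_imset inj); exact: subset_leq_card.
Qed.

Lemma Sset_eq i A x l : Cs i l -> #|Sset i A (x ⋅ l)| = #|Sset i A x|.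
Proof.
move=> hl; apply/eqP; rewrite eqn_leq Sset_le //=.
have := Sset_le A (x ⋅ l) (CsV hl); by rewrite gmulKr.
Qed.

Definition acnt i (A : H -> Prop) x : R :=
  (#|Sset i A x|%:R / #|Sset i (fun _ => True) x|%:R)%R.

Lemma acnt_bounds i A x : (0 <= acnt i A x <= 1)%R.
Proof.
rewrite /acnt; have hp := Sset_T_pos i x.
apply/andP; split; first by apply: divr_ge0.
rewrite ler_pdivrMr ?ltr0n // mul1r ler_nat; apply: subset_leq_card.
by apply/subsetP => xi /SsetP [n [hn [e _]]]; apply/SsetP; exists n.
Qed.

Lemma acnt_add i A B x : (forall z, A z -> B z -> False) ->
  acnt i (fun z => A z \/ B z) x = (acnt i A x + acnt i B x)%R.
Proof. by move=> h; rewrite /acnt Sset_add // natrD mulrDl. Qed.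

Lemma acnt_T i x : acnt i (fun _ => True) x = 1%R.
Proof. rewrite /acnt divff // pnatr_eq0 -lt0n; exact: Sset_T_pos. Qed.

Lemma acnt_shift i A x l : Cs i l -> acnt i A (x ⋅ l) = acnt i A x.
Proof. by move=> hl; rewrite /acnt !Sset_eq. Qed.

Lemma acnt_transl i A g x :
  acnt i (fun z => A (Defs.mul (Defs.inv (qm g)) z)) x = acnt i A (g⁻¹ ⋅ x).
Proof.
rewrite /acnt; congr (_%:R / _%:R)%R; apply: eq_card => xi.
apply/SsetP/SsetP => -[n [hn [e ha]]]; exists n; split => //; split => //.
  by move: ha; rewrite qmapV qmapM gmulA.
by rewrite qmapV qmapM gmulA.
Qed.
End Count.

End Q3.
Import Q3.

Module Q4.

Section Mean.
Variable G : Defs.group.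
Local Notation "x ⋅ y" := (@Defs.mul G x y) (at level 40, left associativity).
Local Notation "x ⁻¹" := (@Defs.inv G x) (at level 3, format "x ⁻¹").
Local Notation "'𝟙'" := (@Defs.one G).
Variable N : G -> Prop.
Hypothesis nN : is_normal G N.
Variable gT : finGroupType.
Local Notation K := (@Kp G N gT).
Let nK : is_normal G K := Kp_normal nN gT.
Local Notation H := (Quot nK).
Local Notation qm := (qmap nK).

Variable Q : Defs.group.
Variable pi : G -> Q.
Hypothesis hpi : is_hom G Q pi.
Hypothesis spi : surjective pi.
Hypothesis kpi : forall x, pi x = Defs.one <-> N x.

Variable m : (Q -> Prop) -> R.
Hypothesis m_ge0 : forall A, (0 <= m A)%R.
Hypothesis m_T : m (fun _ => True) = 1%R.
Hypothesis m_add : forall A B : Q -> Prop, (forall x, A x -> B x -> False) ->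
  m (fun x => A x \/ B x) = (m A + m B)%R.
Hypothesis m_inv : forall (g : Q) (A : Q -> Prop),
  m (fun x => A (Defs.mul (Defs.inv g) x)) = m A.

Variable U : ultra (list G).
Hypothesis hU : forall l, U (fun i => List.In l i).
Variable V : ultra nat.
Hypothesis hV : forall N0, V (fun N => (N0 <= N)%N).

Definition rep (q : Q) : G := proj1_sig (cid (spi q)).
Lemma repP q : pi (rep q) = q.
Proof. by rewrite /rep; case: cid. Qed.

Definition phiA (A : H -> Prop) (q : Q) : R := ulim U (fun i => acnt i A (rep q)).

Lemma phi_bounds A q : (0 <= phiA A q <= 1)%R.
Proof. apply: (ulim_bounds U) => i; exact: acnt_bounds. Qed.

Lemma phi_add A B q : (forall z, A z -> B z -> False) ->
  phiA (fun z => A z \/ B z) q = (phiA A q + phiA B q)%R.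
Proof.
move=> d; rewrite /phiA.
have -> : (fun i => acnt i (fun z => A z \/ B z) (rep q)) =
  (fun i => acnt i A (rep q) + acnt i B (rep q))%R.
  by apply: functional_extensionality => i; rewrite acnt_add.
by apply: ulimD => i; exact: acnt_bounds.
Qed.

Lemma phi_T q : phiA (fun _ => True) q = 1%R.
Proof.
rewrite /phiA; apply: ulim_eq => e he.
by apply: (uf_S _ (@uf_T _ U)) => i _; rewrite acnt_T subrr normr0.
Qed.

Lemma phi_any A q x : pi x = q -> phiA A q = ulim U (fun i => acnt i A x).
Proof.
move=> hx; rewrite /phiA; apply: ulim_ext.
set l := (rep q)⁻¹ ⋅ x.
have hl : N l.
  apply/kpi; rewrite /l hpi (homV hpi) repP hx; exact: gmulV.
apply: (uf_S _ (hU l)) => i hi.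
have -> : x = rep q ⋅ l by rewrite /l gmulKVl.
by rewrite acnt_shift //; apply: Cs_in.
Qed.

Lemma phi_transl A g q :
  phiA (fun z => A (Defs.mul (Defs.inv (qm g)) z)) q =
  phiA A (Defs.mul (Defs.inv (pi g)) q).
Proof.
rewrite [RHS](@phi_any A _ (g⁻¹ ⋅ rep q)); last by rewrite hpi (homV hpi) repP.
rewrite /phiA; congr (ulim U _); apply: functional_extensionality => i.
exact: acnt_transl.
Qed.

Definition mH (A : H -> Prop) : R := Int m V (phiA A).

Lemma amenable_H : amenable H.
Proof.
have hb A q : (0 <= phiA A q <= 1)%R by exact: phi_bounds.
exists mH; split; [|split; [|split]].
- move=> A; apply/RleP; rewrite /mH.
  by case/andP: (Int_bounds m_ge0 m_T m_add hV (hb A) (hb A)).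
- rewrite /mH.
  have e : phiA (fun _ => True) = fun _ => 1%R.
    by apply: functional_extensionality => q; rewrite phi_T.
  have hb1 q : (1 <= phiA (fun _ => True) q <= 1)%R by rewrite e lexx.
  apply/eqP; rewrite eq_le.
  have := Int_bounds m_ge0 m_T m_add hV (hb _) hb1.
  by case/andP => -> ->.
- move=> A B d; rewrite /mH.
  have -> : phiA (fun x => A x \/ B x) = fun q => (phiA A q + phiA B q)%R.
    by apply: functional_extensionality => q; rewrite phi_add.
  apply: (Int_add m_ge0 m_T m_add hV).
  + by move=> q; case/andP: (hb A q).
  + by move=> q; case/andP: (hb B q).
  + by move=> q; rewrite -phi_add //; case/andP: (hb (fun x => A x \/ B x) q).
- move=> h A; rewrite /mH.
  have [g <-] := qmap_surj h.
  have -> : phiA (fun x => A (Defs.mul (Defs.inv (qm g)) x)) =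
    (fun q => phiA A (Defs.mul (Defs.inv (pi g)) q)).
    by apply: functional_extensionality => q; rewrite phi_transl.
  exact: Int_inv.
Qed.
End Mean.

End Q4.
Import Q4.

Module Q5.

Lemma main_proof (G : Defs.group) (N : G -> Prop) :
  is_normal G N -> free_subgroup G N -> amenable_quotient G N ->
  residually_amenable G.
Proof.
move=> nN [_ [S [SN [Ngen Sfree]]]] [Q [pi [hpi [spi [kpi [m [m0 [m1 [madd minv]]]]]]]]] g hg.
case: (pselect (N g)) => hNg; last first.
  exists Q, pi; split => //; split => //; split; first by exists m.
  by move/kpi.
have [w [hw ew]] := Ngen g hNg.
have [r [hr [hin [hv _]]]] := reduce (fun _ : G => (1 : {perm 'I_1})%g) w.
have hrS : word_over S r.
  by apply/word_over_In => l /hin; move/word_over_In: hw; apply.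
have hk : (0 < size r)%N.
  case: r hr hin hv hrS => [|l r] //= _ _ hv _.
  by exfalso; apply: hg; rewrite -ew -hv.
pose sigma := sig_perm hr hk.
pose psi0 := phi sigma S.
have hom0 : Hom N psi0.
  move=> x y hx hy; exact: (phi_hom sigma Sfree Ngen hx hy).
have ne0 : psi0 g <> 1%g.
  rewrite -ew -hv /psi0 phi_word //; exact: eval_ne1.
pose gT : finGroupType := {perm 'I_(size r).+1}.
have nK := Kp_normal nN gT.
have [U hU] := @ultra_exists (list G) (fun a b => forall x, List.In x a -> List.In x b) [::]
  (fun a x h => h) (fun a b c hab hbc x h => hbc x (hab x h))
  (fun a b => ex_intro _ (a ++ b) (conj (fun x h => List.in_or_app _ _ _ (or_introl h))
                                         (fun x h => List.in_or_app _ _ _ (or_intror h)))).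
have hU' : forall l, U (fun i => List.In l i).
  by move=> l; apply: (uf_S _ (hU [:: l])) => i hi; apply: hi; left.
have [V hV] := @ultra_exists nat (fun a b => (a <= b)%N) 0%N
  (fun a => leqnn a) (fun a b c => @leq_trans b a c)
  (fun a b => ex_intro _ (maxn a b) (conj (leq_maxl a b) (leq_maxr a b))).
have m0' : forall A, (0 <= m A)%R by move=> A; apply/RleP.
exists (Quot nK), (qmap nK); split; first exact: qmap_hom.
split; first exact: qmap_surj.
split; first exact: (amenable_H nN gT hpi spi kpi m0' m1 madd minv hU' hV).
rewrite qmap1 => /qmap_eq [_ /(_ psi0 hom0)].
rewrite gmulr1 (HomV nN hom0 hNg).
by move/eqP; rewrite invg_eq1 => /eqP.
Qed.

End Q5.
Import Q5.

Import Pilot.Defs.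

Theorem corollary3p4 (G : group) (N : G -> Prop) :
  is_normal G N -> free_subgroup G N -> amenable_quotient G N ->
  residually_amenable G.
Proof. exact: main_proof. Qed.
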